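(* Let $m \in \mathbb N$ and $X \in M_m$. If there exists $Y \in M_m$ such that $X + Y \in \mathcal U_m$ and $X - Y \in \mathcal U_m$, then there exist $U, V \in \mathcal U_m$, $p, q, r \in \mathbb N \cup\{0\}$, $m_1,\ldots,m_r \in \mathbb N$ and $0 < s_r < \cdots < s_1 < 1$ with $p+q+\sum_{j=1}^r m_j = m$ and $$X = U\Big(I_p \oplus 0_q \oplus \bigoplus_{j=1}^r s_j I_{m_j}\Big)V.$$ Moreover, for any such $U,V,p,q,r,m_j,s_j$, if $Y \in M_m$ satisfies $X \pm Y \in \mathcal U_m$, then there exist $W \in \mathcal U_q$ and $H_j \in \mathcal H_{m_j}\cap\mathcal U_{m_j}$, $j=1,\ldots,r$, such that $$Y = U\Big(0_p \oplus W \oplus \bigoplus_{j=1}^r i\sqrt{1-s_j^2}\, H_j\Big)V.$$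
   Context: $M_m$ is the set of $m\times m$ complex matrices, $\mathcal U_m$ the unitary ones, $\mathcal H_n$ the $n\times n$ complex hermitian matrices; $\oplus$ denotes block-diagonal sum (zero-size blocks omitted). *)

(* Defs.v *)
(* Complex numbers are modelled as R[i] (mathcomp-real-closed
   `complex`) over an arbitrary R : realType (i.e. R = the real numbers). *)
From HB Require Import structures.
From mathcomp Require Import all_boot all_order all_algebra.
From mathcomp Require Import reals complex.
Set Implicit Arguments. Unset Strict Implicit. Unset Printing Implicit Defensive.
Import Order.TTheory GRing.Theory Num.Theory.
Local Open Scope ring_scope.
Local Open Scope complex_scope.

Definition dsum (T : nzRingType) (a b : nat) (A : 'M[T]_a) (B : 'M[T]_b)
  : 'M[T]_(a + b) := block_mx A 0 0 B.

(* I_p (+) 0_q (+) (+)_{j<r} s_j I_{m_j}, viewed as an m x m matrix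
   (conform_mx is the identity cast when p + (q + sum_j m_j) = m). *)
Definition Xform (R : realType) (m p q r : nat) (mm : 'I_r -> nat)
  (s : 'I_r -> R) : 'M[R[i]]_m :=
  conform_mx 0
    (dsum (1%:M : 'M[R[i]]_p)
       (dsum (0 : 'M[R[i]]_q)
          (\mxdiag_(j < r) (((s j)%:C)%:M : 'M[R[i]]_(mm j))))).

Definition Yform (R : realType) (m p q r : nat) (mm : 'I_r -> nat)
  (s : 'I_r -> R) (W : 'M[R[i]]_q) (H : forall j : 'I_r, 'M[R[i]]_(mm j))
  : 'M[R[i]]_m :=
  conform_mx 0
    (dsum (0 : 'M[R[i]]_p)
       (dsum W
          (\mxdiag_(j < r) (((Num.sqrt (1 - s j ^+ 2))%:C * 'i) *: H j)))).

(* Main.v *)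
Require Import Defs.
From HB Require Import structures.
From mathcomp Require Import all_boot all_order all_algebra all_fingroup.
From mathcomp Require Import reals complex.
From mathcomp Require Import lra zify.
Set Implicit Arguments. Unset Strict Implicit. Unset Printing Implicit Defensive.
Import Order.TTheory GRing.Theory Num.Theory.

Lemma count_card (T : finType) (P : pred T) : count P (Finite.enum T) = #|[pred x | P x]|.
Proof. by rewrite cardE /enum_mem size_filter; apply: eq_count. Qed.

Lemma perm_exists (T : eqType) n n' (f : 'I_n -> T) (g : 'I_n' -> T) :
  (forall v, #|[pred a | f a == v]| = #|[pred b | g b == v]|) ->
  exists e : n' = n, exists s : 'S_n, forall a, g (cast_ord (esym e) (s a)) = f a.
Proof.
move=> hc.
have pe : perm_eq [seq f a | a <- enum 'I_n] [seq g b | b <- enum 'I_n'].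
  apply/allP => v _; apply/eqP; rewrite !count_map !count_card.
  by apply: etrans (etrans _ (hc v)) _; apply: eq_card.
have e : n' = n.
  by have := perm_size pe; rewrite !size_map -!enumT !size_enum_ord.
exists e; case: n / e in f hc pe *.
have pe' : perm_eq [seq g b | b <- enum 'I_n'] [tuple f a | a < n'].
  by rewrite perm_sym /=.
have [s hs] := tuple_permP pe'.
exists (s^-1)%g => a; rewrite cast_ord_id.
have := congr1 (fun l => nth (g a) l ((s^-1)%g a)) hs => /=.
rewrite (nth_map a) ?size_enum_ord // nth_ord_enum => ->.
by rewrite (nth_map a) ?size_enum_ord // nth_ord_enum tnth_mktuple permKV.
Qed.

Local Open Scope ring_scope.

Definition wR (R : realType) p q r (mm : 'I_r -> nat) (s : 'I_r -> R)
  (b : 'I_(p + (q + \sum_(j < r) mm j))%N) : R :=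
  match split b with
  | inl _ => 1
  | inr b' => match split b' with inl _ => 0 | inr c => s (tagnat.sig1 c) end
  end.
Arguments wR {R} p q {r} mm s b.

Lemma wR_l (R : realType) p q r (mm : 'I_r -> nat) (s : 'I_r -> R) i :
  wR p q mm s (lshift _ i) = 1.
Proof. by rewrite /wR (unsplitK (inl _ i)). Qed.
Lemma wR_m (R : realType) p q r (mm : 'I_r -> nat) (s : 'I_r -> R) i :
  wR p q mm s (rshift p (lshift _ i)) = 0.
Proof. by rewrite /wR (unsplitK (inr _ (lshift _ i))) (unsplitK (inl _ i)). Qed.
Lemma wR_r (R : realType) p q r (mm : 'I_r -> nat) (s : 'I_r -> R) c :
  wR p q mm s (rshift p (rshift q c)) = s (tagnat.sig1 c).
Proof. by rewrite /wR (unsplitK (inr _ (rshift _ c))) (unsplitK (inr _ c)). Qed.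

Lemma card_split n1 n2 (P : pred 'I_(n1 + n2)) :
  #|[pred x | P x]| = (#|[pred i | P (lshift n2 i)]| + #|[pred j | P (rshift n1 j)]|)%N.
Proof. by rewrite -!sum1_card big_split_ord. Qed.

Lemma card_const n (b : bool) : #|[pred i : 'I_n | b]| = (n * b)%N.
Proof.
case: b; last by rewrite muln0; apply: eq_card0.
by rewrite muln1 -[RHS]card_ord; apply: eq_card.
Qed.

Lemma card_sig (T : eqType) r (mm : 'I_r -> nat) (s : 'I_r -> T) v :
  #|[pred c : 'I_(\sum_(j < r) mm j) | s (tagnat.sig1 c) == v]| =
  (\sum_(j < r) mm j * (s j == v))%N.
Proof.
rewrite -sum1_card big_mkcond /=.
under [RHS]eq_bigr => j _ do rewrite -[mm j]card_ord -sum_nat_const.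
rewrite sig_big_dep (reindex _ tagnat.sig_bij_on) /=.
by apply: eq_bigr => c _; rewrite inE /tagnat.sig1; case: eqP.
Qed.

Lemma card_wR (R : realType) p q r (mm : 'I_r -> nat) (s : 'I_r -> R) v :
  #|[pred b | wR p q mm s b == v]| =
  (p * (1%R == v) + (q * (0%R == v) + \sum_(j < r) mm j * (s j == v)))%N.
Proof.
rewrite card_split (card_split (fun j => wR p q mm s (rshift p j) == v)).
have -> : #|[pred i | wR p q mm s (lshift _ i) == v]| = #|[pred i : 'I_p | 1 == v]|.
  by apply: eq_card => i; rewrite !inE wR_l.
have -> : #|[pred i | wR p q mm s (rshift p (lshift _ i)) == v]| = #|[pred i : 'I_q | 0 == v]|.
  by apply: eq_card => i; rewrite !inE wR_m.
have -> : #|[pred i | wR p q mm s (rshift p (rshift q i)) == v]| =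
          #|[pred c : 'I_(\sum_(j < r) mm j) | s (tagnat.sig1 c) == v]|.
  by apply: eq_card => i; rewrite !inE wR_r.
by rewrite !card_const card_sig.
Qed.

Lemma choose_blocks (R : realType) m (t : 'I_m -> R) : (forall a, 0 <= t a <= 1) ->
 exists p q r (mm : 'I_r -> nat) (s : 'I_r -> R),
  [/\ (forall j, 0 < mm j)%N, (forall j, 0 < s j < 1),
      (forall j k : 'I_r, (j < k)%N -> s k < s j) &
      forall v, #|[pred a | t a == v]| = #|[pred b | wR p q mm s b == v]| ].
Proof.
move=> t01.
set vals := [seq t a | a <- enum 'I_m].
set sl := sort <=%R [seq x <- undup vals | (0 < x) && (x < 1)].
set r := size sl.
pose s := fun j : 'I_r => nth 0 sl (r - j.+1).
pose mm := fun j => #|[pred a | t a == s j]|.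
exists #|[pred a | t a == 1]|, #|[pred a | t a == 0]|, r, mm, s.
have memsl x : (x \in sl) = (0 < x < 1) && (x \in vals).
  by rewrite mem_sort mem_filter mem_undup.
have s_in j : s j \in sl.
  rewrite /s mem_nth //; have := ltn_ord j; rewrite /r; move: (size sl) (nat_of_ord j) => n0 j0; lia.
have invals x : x \in vals -> exists a, t a = x.
  by move=> /mapP [a _ ->]; exists a.
have sorted_sl : sorted <%R sl.
  rewrite lt_sorted_uniq_le sort_le_sorted andbT sort_uniq filter_uniq //.
  exact: undup_uniq.
have sdec (j k : 'I_r) : (j < k)%N -> s k < s j.
  move=> jk; rewrite /s; apply: (sorted_ltn_nth lt_trans) => //; rewrite ?inE /r;
  have := ltn_ord j; have := ltn_ord k; rewrite /r; move: jk; move: (size sl) (nat_of_ord j) (nat_of_ord k) => n0 j0 k0; lia.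
have sinj (j k : 'I_r) : s j = s k -> j = k.
  move=> e; case: (ltngtP j k) => [jk|kj|/val_inj //].
  - by have := sdec _ _ jk; rewrite e ltxx.
  - by have := sdec _ _ kj; rewrite e ltxx.
have s01 j : 0 < s j < 1 by have := s_in j; rewrite memsl => /andP[].
split => //.
- move=> j; apply/card_gt0P.
  have := s_in j; rewrite memsl => /andP[_ /invals [a ha]].
  by exists a; rewrite inE ha.
- move=> v; rewrite card_wR.
  case: (eqVneq v 1) => [->|v1].
    rewrite ?eqxx muln1 [0%R == 1%R]eq_sym oner_eq0 muln0 add0n big1 ?addn0 // => j _.
    by have /andP[_ h] := s01 j; rewrite lt_eqF ?muln0.
  case: (eqVneq v 0) => [->|v0].
    rewrite muln0 muln1 add0n big1 ?addn0 // => j _.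
    by have /andP[h _] := s01 j; rewrite gt_eqF ?muln0.
  rewrite !muln0 !add0n.
  case: (boolP (v \in sl)) => vin.
    have [i ilt iv] := nthP 0 vin.
    have j0lt : (r - i.+1 < r)%N by rewrite /r; move: ilt; move: (size sl) => n0; lia.
    pose j0 : 'I_r := Ordinal j0lt.
    have sj0 : s j0 = v.
      rewrite /s /= -iv; congr nth; rewrite /r; move: ilt; move: (size sl) => n0; lia.
    rewrite (bigD1 j0) //= sj0 eqxx muln1 big1 ?addn0.
      by rewrite /mm sj0.
    move=> j ne; rewrite -sj0.
    have -> : (s j == s j0) = false by apply/eqP => /sinj /eqP; rewrite (negbTE ne).
    by rewrite muln0.
  rewrite big1.
    apply: eq_card0 => a; rewrite !inE; apply/negP => /eqP ta.
    move: vin; rewrite memsl -ta (map_f t (mem_enum _ a)) andbT.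
    have /andP[h0 h1] := t01 a.
    by rewrite !lt_neqAle h0 h1 andbT andbT ta eq_sym v0 v1.
  move=> j _; have -> : (s j == v) = false; last by rewrite muln0.
  by apply/eqP => e; move: vin; rewrite -e s_in.
Qed.

Local Open Scope sesquilinear_scope.

Lemma sum4 (V : zmodType) (a b c d : V) :
  (a + b + (c + d)) + (a - b - (c - d)) = (a + d) *+ 2.
Proof.
rewrite opprB -!addrA.
rewrite [d + (a + _)]addrCA [c + (a + _)]addrCA [b + (a + _)]addrCA.
rewrite [c + (d + _)]addrCA [b + (d + _)]addrCA.
rewrite [c + (- b + _)]addrCA (addNKr b) [c + (d - c)]addrCA subrr addr0.
by rewrite mulr2n -addrA [d + (a + d)]addrCA.
Qed.

Lemma dif4 (V : zmodType) (a b c d : V) :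
  (a + b + (c + d)) - (a - b - (c - d)) = (b + c) *+ 2.
Proof.
rewrite opprB !opprD !opprK -!addrA.
rewrite [d + (c + _)]addrCA (addNKr d).
rewrite [c + (- a + _)]addrCA [c + (- a + _)]addrCA [b + (- a + _)]addrCA (addNKr a).
by rewrite mulr2n -addrA [c + b]addrC.
Qed.

Lemma ctD (C : numClosedFieldType) m n (A B : 'M[C]_(m,n)) : (A + B)^t* = A^t* + B^t*.
Proof. by rewrite linearD map_mxD. Qed.
Lemma ctN (C : numClosedFieldType) m n (A : 'M[C]_(m,n)) : (- A)^t* = - A^t*.
Proof. by rewrite linearN map_mxN. Qed.
Lemma ctB (C : numClosedFieldType) m n (A B : 'M[C]_(m,n)) : (A - B)^t* = A^t* - B^t*.
Proof. by rewrite ctD ctN. Qed.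
Lemma ctM (C : numClosedFieldType) m n k (A : 'M[C]_(m,n)) (B : 'M[C]_(n,k)) :
  (A *m B)^t* = B^t* *m A^t*.
Proof. by rewrite trmx_mul map_mxM. Qed.

Lemma mulrn2_inj (C : numFieldType) m n (x y : 'M[C]_(m,n)) : x *+ 2 = y *+ 2 -> x = y.
Proof.
rewrite -!scaler_nat => /scalerI; apply.
by rewrite pnatr_eq0.
Qed.

Lemma pm_unitary (C : numClosedFieldType) n (D Y : 'M[C]_n) :
 (D + Y) \is unitarymx -> (D - Y) \is unitarymx ->
 [/\ D *m D^t* + Y *m Y^t* = 1%:M, D^t* *m D + Y^t* *m Y = 1%:M,
     D *m Y^t* + Y *m D^t* = 0 & D^t* *m Y + Y^t* *m D = 0].
Proof.
move=> /unitarymxP hP /unitarymxP hM.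
have hP' := mulmx1C hP; have hM' := mulmx1C hM.
rewrite ctD mulmxDl !mulmxDr in hP.
rewrite ctB mulmxBl !mulmxBr in hM.
rewrite ctD mulmxDl !mulmxDr in hP'.
rewrite ctB mulmxBl !mulmxBr in hM'.
split.
- apply: mulrn2_inj; rewrite -(sum4 _ (D *m Y^t*) (Y *m D^t*)) hP hM //.
- apply: mulrn2_inj; rewrite -(sum4 _ (D^t* *m Y) (Y^t* *m D)) hP' hM' //.
- apply: mulrn2_inj; rewrite -(dif4 (D *m D^t*) _ _ (Y *m Y^t*)) hP hM subrr mul0rn //.
- apply: mulrn2_inj; rewrite -(dif4 (D^t* *m D) _ _ (Y^t* *m Y)) hP' hM' subrr mul0rn //.
Qed.

Lemma comm_DY (C : numClosedFieldType) n (D Y : 'M[C]_n) :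
 (D + Y) \is unitarymx -> (D - Y) \is unitarymx ->
 Y *m (D^t* *m D) = (D *m D^t*) *m Y.
Proof.
move=> hP hM; have [h1 h2 _ _] := pm_unitary hP hM.
have e1 : Y^t* *m Y = 1%:M - D^t* *m D by rewrite -h2 [D^t* *m D + _]addrC addrK.
have e2 : Y *m Y^t* = 1%:M - D *m D^t* by rewrite -h1 [D *m D^t* + _]addrC addrK.
have := mulmxA Y (Y^t*) Y; rewrite e1 e2 mulmxBr mulmxBl mulmx1 mul1mx.
by move=> /addrI /oppr_inj.
Qed.

Lemma diag_comm_entry (C : numClosedFieldType) n (w : 'rV[C]_n) (Y : 'M[C]_n) :
  Y *m (diag_mx w *m diag_mx w) = (diag_mx w *m diag_mx w) *m Y ->
  forall a b, Y a b * (w 0 b ^+ 2) = w 0 a ^+ 2 * Y a b.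
Proof.
move=> h a b; have /matrixP/(_ a b) := h.
rewrite mulmxA -[in RHS]mulmxA !mul_mx_diag !mul_diag_mx !mxE.
by rewrite -mulrA -expr2 mulrA -expr2.
Qed.

Lemma block1 (C : numClosedFieldType) n (s : C) (Z : 'M[C]_n) :
  s^* = s -> (s%:M + Z) \is unitarymx -> (s%:M - Z) \is unitarymx ->
  Z *m Z^t* = (1 - s ^+ 2)%:M /\ s *: (Z + Z^t*) = 0.
Proof.
move=> hs hP hM; have [h1 _ h3 _] := pm_unitary hP hM.
have eD : (s%:M : 'M[C]_n)^t* = s%:M.
  by rewrite tr_scalar_mx map_scalar_mx; congr (_%:M); exact: hs.
rewrite eD -scalar_mxM -expr2 in h1.
rewrite eD mul_scalar_mx mul_mx_scalar in h3.
split; first by rewrite raddfB /= -h1 addrAC subrr add0r.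
by rewrite scalerDr addrC.
Qed.

Lemma mmt0 (C : numClosedFieldType) m n (M : 'M[C]_(m, n)) :
  M *m M^t* = 0 -> M = 0.
Proof.
move=> h; apply/matrixP => a b; have /matrixP/(_ a a) := h.
rewrite !mxE => hs.
have := psumr_eq0P (P := predT) (fun k _ => mul_conjC_ge0 (M a k)).
move=> /(_ _ b isT) => H.
apply/eqP; rewrite -mul_conjC_eq0; apply/eqP; apply: H.
rewrite -[RHS]hs; apply: eq_bigr => k _; rewrite !mxE //.
Qed.

Lemma ct_dsum (C : numClosedFieldType) a b (A : 'M[C]_a) (B : 'M[C]_b) :
  (dsum A B)^t* = dsum (A^t*) (B^t*).
Proof. by rewrite /dsum tr_block_mx map_block_mx !trmx0 !map_mx0. Qed.

Lemma mul_dsum (C : numClosedFieldType) a b (A A' : 'M[C]_a) (B B' : 'M[C]_b) :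
  dsum A B *m dsum A' B' = dsum (A *m A') (B *m B').
Proof. by rewrite /dsum mulmx_block !mulmx0 !mul0mx !addr0 add0r. Qed.

Lemma dsum_unitary (C : numClosedFieldType) a b (A : 'M[C]_a) (B : 'M[C]_b) :
  dsum A B \is unitarymx -> A \is unitarymx /\ B \is unitarymx.
Proof.
move=> /unitarymxP; rewrite ct_dsum mul_dsum scalar_mx_block /dsum.
by move=> /eq_block_mx [h1 _ _ h2]; split; apply/unitarymxP.
Qed.

Lemma submxblock_map (T1 T2 : Type) (f : T1 -> T2) p q (p_ : 'I_p -> nat) (q_ : 'I_q -> nat)
  (M : 'M[T1]_(\sum_i p_ i, \sum_i q_ i)) i j :
  submxblock (map_mx f M) i j = map_mx f (submxblock M i j).
Proof. by apply/matrixP => a b; rewrite !mxE. Qed.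

Lemma map_mxdiag (C : numClosedFieldType) r (p_ : 'I_r -> nat) (B : forall i, 'M[C]_(p_ i)) :
  map_mx Num.conj (\mxdiag_i B i) = \mxdiag_i (map_mx Num.conj (B i)).
Proof.
apply/mxblockP => i j; rewrite submxblock_map /mxdiag !mxblockK.
case: (eqVneq i j) => [<-|_]; first by rewrite !conform_mx_id.
exact: map_mx0.
Qed.

Lemma ct_mxdiag (C : numClosedFieldType) r (p_ : 'I_r -> nat) (B : forall i, 'M[C]_(p_ i)) :
  (\mxdiag_i B i)^t* = \mxdiag_i (B i)^t*.
Proof. by rewrite tr_mxdiag map_mxdiag. Qed.

Lemma mul_mxdiag (C : numClosedFieldType) r (p_ : 'I_r -> nat) (A B : forall i, 'M[C]_(p_ i)) :
  \mxdiag_i A i *m \mxdiag_i B i = \mxdiag_i (A i *m B i).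
Proof.
rewrite {2}/mxdiag mul_mxdiag_mxblock /mxdiag; apply: eq_mxblock => i j.
case: (eqVneq i j) => [<-|_]; first by rewrite !conform_mx_id.
exact: mulmx0.
Qed.

Lemma mxdiag_unitary (C : numClosedFieldType) r (p_ : 'I_r -> nat) (B : forall i, 'M[C]_(p_ i)) :
  \mxdiag_i B i \is unitarymx -> forall j, B j \is unitarymx.
Proof.
move=> /unitarymxP; rewrite ct_mxdiag mul_mxdiag -(mxdiagZ (p_ := p_)).
by move=> /eq_mxdiagP h j; apply/unitarymxP; exact: h j.
Qed.

Local Open Scope complex_scope.

Definition XB (R : realType) p q r (mm : 'I_r -> nat) (s : 'I_r -> R)
  : 'M[R[i]]_(p + (q + \sum_(j < r) mm j)) :=
  dsum (1%:M : 'M[R[i]]_p) (dsum (0 : 'M[R[i]]_q)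
     (\mxdiag_(j < r) (((s j)%:C)%:M : 'M[R[i]]_(mm j)))).

Definition wC (R : realType) p q r (mm : 'I_r -> nat) (s : 'I_r -> R)
  : 'rV[R[i]]_(p + (q + \sum_(j < r) mm j)) :=
  row_mx (const_mx 1) (row_mx 0 (\mxrow_(j < r) (const_mx ((s j)%:C) : 'rV[R[i]]_(mm j)))).

Lemma XB_diag (R : realType) p q r (mm : 'I_r -> nat) (s : 'I_r -> R) :
  XB p q mm s = diag_mx (wC p q mm s).
Proof.
rewrite /wC !diag_mx_row diag_mxrow /XB /dsum diag_const_mx linear0.
by congr block_mx; congr block_mx; apply: eq_mxdiag => j; rewrite diag_const_mx.
Qed.

Lemma XB_ct (R : realType) p q r (mm : 'I_r -> nat) (s : 'I_r -> R) :
  (XB p q mm s)^t* = XB p q mm s.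
Proof.
rewrite /XB !ct_dsum ct_mxdiag tr_scalar_mx map_scalar_mx rmorph1 trmx0 map_mx0.
congr dsum; congr dsum; apply: eq_mxdiag => j.
by rewrite tr_scalar_mx map_scalar_mx; congr (_%:M); exact: conjc_real.
Qed.

Lemma wC_l (R : realType) p q r (mm : 'I_r -> nat) (s : 'I_r -> R) i :
  wC p q mm s 0 (lshift _ i) = 1.
Proof. by rewrite /wC row_mxEl mxE. Qed.
Lemma wC_m (R : realType) p q r (mm : 'I_r -> nat) (s : 'I_r -> R) i :
  wC p q mm s 0 (rshift p (lshift _ i)) = 0.
Proof. by rewrite /wC row_mxEr row_mxEl mxE. Qed.
Lemma wC_r (R : realType) p q r (mm : 'I_r -> nat) (s : 'I_r -> R) c :
  wC p q mm s 0 (rshift p (rshift q c)) = (s (tagnat.sig1 c))%:C.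
Proof. by rewrite /wC row_mxEr row_mxEr !mxE. Qed.

Definition YB (R : realType) p q r (mm : 'I_r -> nat) (s : 'I_r -> R)
  (W : 'M[R[i]]_q) (H : forall j : 'I_r, 'M[R[i]]_(mm j))
  : 'M[R[i]]_(p + (q + \sum_(j < r) mm j)) :=
  dsum (0 : 'M[R[i]]_p) (dsum W
     (\mxdiag_(j < r) (((Num.sqrt (1 - s j ^+ 2))%:C * 'i) *: H j))).

Lemma realC_eq (R : realType) (x y : R) : (x%:C == y%:C) = (x == y).
Proof. exact: (inj_eq (@complexI R)). Qed.

Lemma zero_entry (R : realType) n (w : 'rV[R[i]]_n) (Y : 'M[R[i]]_n) a b :
  Y a b * (w 0 b ^+ 2) = w 0 a ^+ 2 * Y a b -> w 0 a ^+ 2 != w 0 b ^+ 2 -> Y a b = 0.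
Proof.
move=> /eqP h ne; move: h; rewrite -subr_eq0 [w 0 a ^+ 2 * _]mulrC -mulrBr mulf_eq0.
by rewrite subr_eq0 [w 0 b ^+ 2 == _]eq_sym (negbTE ne) orbF => /eqP.
Qed.

Lemma sqC (R : realType) (x : R) : (x%:C) ^+ 2 = (x ^+ 2)%:C.
Proof. by rewrite rmorphXn. Qed.

Lemma dsumD (T : nzRingType) a b (A A' : 'M[T]_a) (B B' : 'M[T]_b) :
  dsum A B + dsum A' B' = dsum (A + A') (B + B').
Proof. by rewrite /dsum add_block_mx !addr0. Qed.
Lemma dsumN (T : nzRingType) a b (A : 'M[T]_a) (B : 'M[T]_b) :
  - dsum A B = dsum (- A) (- B).
Proof. by rewrite /dsum opp_block_mx !oppr0. Qed.
Lemma dsumB (T : nzRingType) a b (A A' : 'M[T]_a) (B B' : 'M[T]_b) :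
  dsum A B - dsum A' B' = dsum (A - A') (B - B').
Proof. by rewrite dsumN dsumD. Qed.

Lemma iC_neq0 (R : realType) : ('i : R[i]) != 0.
Proof. by apply/eqP => /(congr1 (@complex.Im R)) /= /eqP; rewrite oner_eq0. Qed.

Lemma conj_iC (R : realType) : Num.conj ('i : R[i]) = - 'i.
Proof. by apply/eqP; rewrite eq_complex /= oppr0 !eqxx. Qed.

Lemma conjC_real (R : realType) (x : R) : Num.conj (x%:C) = x%:C.
Proof. exact: conjc_real. Qed.

Lemma ctZ (C : numClosedFieldType) m n (a : C) (A : 'M[C]_(m,n)) :
  (a *: A)^t* = Num.conj a *: A^t*.
Proof. by apply/matrixP => i j; rewrite !mxE rmorphM. Qed.

Lemma conjV (C : numClosedFieldType) (x : C) : Num.conj (x^-1) = (Num.conj x)^-1.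
Proof. exact: fmorphV. Qed.

Lemma oneC (R : realType) : (1 : R[i]) = 1%:C. Proof. by []. Qed.
Lemma zeroC (R : realType) : (0 : R[i]) = 0%:C. Proof. by []. Qed.

Lemma sq_ne1 (R : realType) (x : R) : 0 < x < 1 -> x ^+ 2 != 1.
Proof. by move=> /andP[h0 h1]; apply/negP => /eqP h; nra. Qed.
Lemma sq_ne0 (R : realType) (x : R) : 0 < x < 1 -> x ^+ 2 != 0.
Proof. by move=> /andP[h0 h1]; apply/negP => /eqP h; nra. Qed.

Lemma sq_lt1 (R : realType) (x : R) : 0 < x < 1 -> 0 < 1 - x ^+ 2.
Proof. by move=> /andP[h0 h1]; nra. Qed.

Lemma uniq_part (R : realType) p q r (mm : 'I_r -> nat) (s : 'I_r -> R)
  (Yp : 'M[R[i]]_(p + (q + \sum_(j < r) mm j))) :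
  (forall j, 0 < s j < 1) -> (forall j k : 'I_r, (j < k)%N -> s k < s j) ->
  (XB p q mm s + Yp) \is unitarymx -> (XB p q mm s - Yp) \is unitarymx ->
  exists (W : 'M[R[i]]_q) (H : forall j : 'I_r, 'M[R[i]]_(mm j)),
    [/\ W \is unitarymx,
        (forall j, H j \is hermitianmx (mm j) false Num.conj /\ H j \is unitarymx)
      & Yp = YB p s W H].
Proof.
move=> s01 sdec hP hM.
have hc := comm_DY hP hM; rewrite XB_ct XB_diag in hc.
have hw := diag_comm_entry hc.
have Z a b : wC p q mm s 0 a ^+ 2 != wC p q mm s 0 b ^+ 2 -> Yp a b = 0.
  exact: (zero_entry (hw a b)).
have sne1 j : ((s j)%:C)^+2 != 1 :> R[i].
  by rewrite sqC oneC realC_eq sq_ne1.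
have sne0 j : ((s j)%:C)^+2 != 0 :> R[i].
  by rewrite sqC zeroC realC_eq sq_ne0.
have sneq i j : i != j -> ((s i)%:C)^+2 != ((s j)%:C)^+2 :> R[i].
  move=> nij; rewrite !sqC realC_eq eqrXn2 //; last 2 first.
  - by have /andP[h0 _] := s01 i; exact: ltW.
  - by have /andP[h0 _] := s01 j; exact: ltW.
  case: (ltngtP i j) => [lij|lji|eij]; first by rewrite gt_eqF // sdec.
  - by rewrite lt_eqF // sdec.
  - by move: nij; rewrite (val_inj eij) eqxx.
have e10 : (1 : R[i]) ^+ 2 != 0 ^+ 2 by rewrite expr1n expr2 mul0r oner_eq0.
have Y12 : ursubmx Yp = 0.
  apply/matrixP => i k; rewrite !mxE; apply: Z; rewrite wC_l.
  case: (split_ordP k) => [k' ->|c ->]; first by rewrite wC_m.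
  by rewrite wC_r expr1n eq_sym.
have Y21 : dlsubmx Yp = 0.
  apply/matrixP => k i; rewrite !mxE; apply: Z; rewrite wC_l.
  case: (split_ordP k) => [k' ->|c ->]; first by rewrite wC_m eq_sym.
  by rewrite wC_r expr1n.
have Y2_12 : ursubmx (drsubmx Yp) = 0.
  apply/matrixP => i k; rewrite !mxE; apply: Z.
  by rewrite wC_m wC_r expr2 mul0r eq_sym.
have Y2_21 : dlsubmx (drsubmx Yp) = 0.
  apply/matrixP => k i; rewrite !mxE; apply: Z.
  by rewrite wC_m wC_r [0 ^+ 2]expr2 mul0r.
set Yd := drsubmx (drsubmx Yp).
have Zblk : Yd = \mxdiag_j (submxblock Yd j j).
  apply/mxblockP => i j; rewrite /mxdiag mxblockK.
  case: (eqVneq i j) => [<-|nij]; first by rewrite conform_mx_id.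
  apply/matrixP => k l; rewrite !mxE; apply: Z.
  by rewrite !wC_r !tagnat.Rank1K sneq.
set Y11 := ulsubmx Yp; set W := ulsubmx (drsubmx Yp).
set Zj := fun j => submxblock Yd j j.
have eY : Yp = dsum Y11 (dsum W (\mxdiag_j Zj j)).
  rewrite /dsum -Zblk /Yd -Y2_12 -Y2_21 submxK /Y11 -Y12 -Y21 submxK //.
rewrite eY /XB !dsumD -mxdiagD in hP.
rewrite eY /XB !dsumB -mxdiagB in hM.
have [hP1 /dsum_unitary [hPW hPZ]] := dsum_unitary hP.
have [hM1 /dsum_unitary [hMW hMZ]] := dsum_unitary hM.
have Y11_0 : Y11 = 0.
  have [e _] := block1 (rmorph1 _) hP1 hM1.
  by apply: mmt0; rewrite e expr1n subrr raddf0.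
rewrite add0r in hPW.
have hz j := block1 (conjc_real _) (mxdiag_unitary hPZ j) (mxdiag_unitary hMZ j).
set k := fun j => (Num.sqrt (1 - s j ^+ 2))%:C * 'i : R[i].
have k0 j : k j != 0.
  rewrite /k mulf_neq0 ?neq0Ci // zeroC realC_eq sqrtr_eq0 -ltNge.
  exact: sq_lt1.
have ck j : Num.conj (k j) = - k j.
  by rewrite /k rmorphM /= conjC_real conjCi mulrN.
have kk j : k j * Num.conj (k j) = (1 - s j ^+ 2)%:C.
  rewrite ck mulrN -expr2 /k exprMn sqC sqr_sqrtr; last exact/ltW/sq_lt1.
  by rewrite sqrCi mulrN1 opprK.
have Zt j : (Zj j)^t* = - Zj j.
  have [_ /eqP] := hz j; rewrite scaler_eq0 zeroC realC_eq.
  have /andP[h0 _] := s01 j; rewrite gt_eqF //= addrC addr_eq0 => /eqP //.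
have ZZ j : Zj j *m (Zj j)^t* = (1 - s j ^+ 2)%:C%:M.
  by have [-> _] := hz j; rewrite sqC oneC -rmorphB.
exists W, (fun j => (k j)^-1 *: Zj j); split => //.
- move=> j; split.
  + apply/is_hermitianmxP; rewrite expr0 scale1r ctZ.
    by rewrite Zt conjV ck invrN scaleNr scalerN opprK.
  + apply/unitarymxP; rewrite ctZ -scalemxAl -scalemxAr.
    rewrite scalerA ZZ scale_scalar_mx conjV -invfM kk mulVf //.
    by rewrite zeroC realC_eq gt_eqF // sq_lt1.
- rewrite eY Y11_0 /YB; congr dsum; congr dsum; apply: eq_mxdiag => j.
  by rewrite scalerA mulfV ?scale1r //; exact: k0 j.
Qed.


Lemma Xform_XB (R : realType) p q r (mm : 'I_r -> nat) (s : 'I_r -> R) :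
  Xform (p + (q + \sum_(j < r) mm j))%N p q mm s = XB p q mm s.
Proof. by rewrite /Xform conform_mx_id. Qed.

Lemma Yform_YB (R : realType) p q r (mm : 'I_r -> nat) (s : 'I_r -> R) W H :
  Yform (p + (q + \sum_(j < r) mm j))%N p s W H = YB p s W H.
Proof. by rewrite /Yform conform_mx_id. Qed.

Lemma uniq_main (R : realType) (m : nat) (X : 'M[R[i]]_m) 
  (U V : 'M[R[i]]_m) (p q r : nat) (mm : 'I_r -> nat) (s : 'I_r -> R) :
     U \is unitarymx -> V \is unitarymx ->
     (forall j, 0 < mm j)%N ->
     (forall j, 0 < s j < 1) ->
     (forall j k : 'I_r, (j < k)%N -> s k < s j) ->
     (p + q + \sum_(j < r) mm j)%N = m ->
     X = U *m Xform m p q mm s *m V ->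
     forall Y : 'M[R[i]]_m,
       (X + Y) \is unitarymx -> (X - Y) \is unitarymx ->
       exists (W : 'M[R[i]]_q) (H : forall j : 'I_r, 'M[R[i]]_(mm j)),
         [/\ W \is unitarymx,
             (forall j, H j \is hermitianmx (mm j) false Num.conj
                        /\ H j \is unitarymx)
           & Y = U *m Yform m p s W H *m V].
Proof.
move=> hU hV _ s01 sdec hsum hX Y hP hM.
have e : (p + (q + \sum_(j < r) mm j))%N = m by rewrite addnA.
clear hsum; subst m; rewrite Xform_XB in hX.
have hUU : U^t* *m U = 1%:M := mulmx1C (unitarymxP hU).
have hVV : V *m V^t* = 1%:M := unitarymxP hV.
have hVV' : V^t* *m V = 1%:M := mulmx1C hVV.
have hUU' : U *m U^t* = 1%:M := unitarymxP hU.
set Yp := U^t* *m Y *m V^t*.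
have eX : U^t* *m X *m V^t* = XB p q mm s.
  by rewrite hX mulmxA mulmxA hUU mul1mx -mulmxA hVV mulmx1.
have uP : XB p q mm s + Yp \is unitarymx.
  rewrite -eX /Yp -mulmxDl -mulmxDr.
  apply: mul_unitarymx; last by rewrite trmxC_unitary; exact: hV.
  by apply: mul_unitarymx; [rewrite trmxC_unitary; exact: hU | exact: hP].
have uM : XB p q mm s - Yp \is unitarymx.
  rewrite -eX /Yp -mulmxBl -mulmxBr.
  apply: mul_unitarymx; last by rewrite trmxC_unitary; exact: hV.
  by apply: mul_unitarymx; [rewrite trmxC_unitary; exact: hU | exact: hM].
have [W [H [hW hH eY]]] := uniq_part s01 sdec uP uM.
exists W, H; split; [exact: hW | exact: hH | ]. 
rewrite Yform_YB -eY /Yp.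
by rewrite !mulmxA hUU' mul1mx -mulmxA hVV' mulmx1.
Qed.


Definition ph (R : realType) (z : R[i]) : R[i] := if z == 0 then 1 else z / `|z|.
Definition tz (R : realType) (z : R[i]) : R :=
  Num.sqrt (complex.Re z ^+ 2 + complex.Im z ^+ 2).

Lemma normC_tz (R : realType) (z : R[i]) : `|z| = (tz z)%:C%C.
Proof. exact: normc_def. Qed.

Lemma phase_mul (R : realType) (z : R[i]) : z = ph z * (tz z)%:C%C.
Proof.
rewrite -normC_tz /ph; case: eqP => [->|/eqP nz]; first by rewrite normr0 mulr0.
by rewrite divfK // normr_eq0.
Qed.

Lemma phase_unit (R : realType) (z : R[i]) : ph z * Num.conj (ph z) = 1.
Proof.
rewrite /ph; case: eqP => [_|/eqP nz]; first by rewrite rmorph1 mulr1.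
rewrite rmorphM /= conjV conj_normC mulrACA -normCK -invfM -expr2 mulfV //.
by rewrite expf_neq0 // normr_eq0.
Qed.

Lemma tz_ge0 (R : realType) (z : R[i]) : 0 <= tz z.
Proof. exact: sqrtr_ge0. Qed.

Lemma half_sum (R : realType) m (X Y : 'M[R[i]]_m) : X = 2^-1 *: ((X + Y) + (X - Y)).
Proof.
rewrite addrACA subrr addr0 -[X + X]mulr2n -(scaler_nat 2 X) scalerA mulVf ?scale1r //.
by rewrite pnatr_eq0.
Qed.

Lemma diag_decomp (R : realType) m (X Y : 'M[R[i]]_m) :
  (X + Y) \is unitarymx -> (X - Y) \is unitarymx ->
  exists (U0 P0 : 'M[R[i]]_m) (t : 'I_m -> R),
   [/\ U0 \is unitarymx, P0 \is unitarymx, (forall k, 0 <= t k <= 1) &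
       X = U0 *m diag_mx (\row_k (t k)%:C%C) *m P0].
Proof.
move=> hA hB.
have eX := half_sum X Y.
set A := X + Y in hA eX *; set B := X - Y in hB eX *.
set Q := A^t* *m B.
have hQ : Q \is unitarymx.
  by apply: mul_unitarymx; [rewrite trmxC_unitary; exact: hA | exact: hB].
have hQn : Q \is normalmx.
  by apply/normalmxP; rewrite (unitarymxP hQ); apply/esym/mulmx1C/(unitarymxP hQ).
have /orthomx_spectralP eQ := hQn.
set P := spectralmx Q in eQ; set lam := spectral_diag Q in eQ.
have hP : P \is unitarymx := spectral_unitarymx Q.
rewrite invmx_unitary in eQ; last exact: hP.
have hPP : P^t* *m P = 1%:M := mulmx1C (unitarymxP hP).
have hPP' : P *m P^t* = 1%:M := unitarymxP hP.
have AQ : A *m Q = B by rewrite /Q mulmxA (unitarymxP hA) mul1mx.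
have hL : diag_mx lam \is unitarymx.
  have -> : diag_mx lam = P *m Q *m P^t*.
    by rewrite eQ !mulmxA hPP' mul1mx -mulmxA hPP' mulmx1.
  apply: mul_unitarymx; last by rewrite trmxC_unitary; exact: hP.
  by apply: mul_unitarymx; [exact: hP | exact: hQ].
have lam1 k : `|lam 0 k| = 1.
  have /unitarymxP/matrixP/(_ k k) := hL.
  rewrite tr_diag_mx map_diag_mx mul_diag_mx !mxE eqxx !mulr1n -normCK => /eqP.
  by rewrite sqrp_eq1 // => /eqP.
pose mu := fun k => 2^-1 * (1 + lam 0 k).
have emu : diag_mx (\row_k mu k) = 2^-1 *: (1%:M + diag_mx lam).
  apply/matrixP => i j; rewrite !mxE.
  case: (eqVneq i j) => [->|ne]; first by rewrite !mulr1n.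
  by rewrite /= !mulr0n addr0 mulr0.
have hmu : P^t* *m (2^-1 *: (1%:M + diag_mx lam)) *m P = 2^-1 *: (1%:M + Q).
  by rewrite -scalemxAr -scalemxAl mulmxDr mulmxDl mulmx1 hPP eQ.
have eX2 : X = A *m (P^t* *m diag_mx (\row_k mu k) *m P).
  by rewrite emu hmu -scalemxAr mulmxDr mulmx1 AQ -eX.
pose D := diag_mx (\row_k ph (mu k)).
pose t := fun k => tz (mu k).
have eD : diag_mx (\row_k mu k) = D *m diag_mx (\row_k (t k)%:C%C).
  by apply/matrixP => i j; rewrite mul_diag_mx !mxE [in RHS]mulrnAr /t -phase_mul.
have hD : D \is unitarymx.
  apply/unitarymxP; rewrite tr_diag_mx map_diag_mx mul_diag_mx.
  apply/matrixP => i j; rewrite !mxE.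
  case: (eqVneq i j) => [->|ne]; first by rewrite !mulr1n phase_unit.
  by rewrite /= !mulr0n mulr0.
exists (A *m P^t* *m D), P, t; split.
- apply: mul_unitarymx; last exact: hD.
  by apply: mul_unitarymx; [exact: hA | rewrite trmxC_unitary; exact: hP].
- exact: hP.
- move=> k; rewrite tz_ge0 /=.
  have : `|mu k| <= 1.
    rewrite /mu normrM normfV normr_nat.
    have h2 : `|1 + lam 0 k| <= 2.
      by apply: le_trans (ler_normD _ _) _; rewrite normr1 lam1.
    apply: le_trans (ler_wpM2l _ h2) _; first by rewrite invr_ge0 ler0n.
    by rewrite mulVf // pnatr_eq0.
  by rewrite normC_tz oneC lecR.
- by rewrite eX2 eD !mulmxA.
Qed.


Lemma map_conj_perm (C : numClosedFieldType) n (σ : 'S_n) :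
  map_mx Num.conj (perm_mx σ : 'M[C]_n) = perm_mx σ.
Proof. by apply/matrixP => i j; rewrite !mxE rmorph_nat. Qed.

Lemma perm_unitary (C : numClosedFieldType) n (σ : 'S_n) :
  (perm_mx σ : 'M[C]_n) \is unitarymx.
Proof.
apply/unitarymxP; rewrite tr_perm_mx map_conj_perm -perm_mxM mulgV.
exact: perm_mx1.
Qed.

Lemma Xform_cast (R : realType) p q r (mm : 'I_r -> nat) (s : 'I_r -> R) m
  (e : (p + (q + \sum_(j < r) mm j))%N = m) a b :
  Xform m p q mm s a b = XB p q mm s (cast_ord (esym e) a) (cast_ord (esym e) b).
Proof.
move: a b; case: m / e => a b.
by rewrite Xform_XB !cast_ord_id.
Qed.

Lemma wC_wR (R : realType) p q r (mm : 'I_r -> nat) (s : 'I_r -> R) b :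
  wC p q mm s 0 b = (wR p q mm s b)%:C%C.
Proof.
case: (split_ordP b) => [i ->|b' ->]; first by rewrite wC_l wR_l.
case: (split_ordP b') => [i ->|c ->]; first by rewrite wC_m wR_m.
by rewrite wC_r wR_r.
Qed.

Lemma sort_diag (R : realType) m (t : 'I_m -> R) : (forall a, 0 <= t a <= 1) ->
  exists p q r (mm : 'I_r -> nat) (s : 'I_r -> R) (Pm : 'M[R[i]]_m),
   [/\ Pm \is unitarymx, (forall j, 0 < mm j)%N, (forall j, 0 < s j < 1),
       (forall j k : 'I_r, (j < k)%N -> s k < s j) &
       (p + q + \sum_(j < r) mm j)%N = m /\
       diag_mx (\row_k (t k)%:C%C) = Pm^t* *m Xform m p q mm s *m Pm].
Proof.
move=> t01.
have [p [q [r [mm [s [hmm hs hdec hc]]]]]] := choose_blocks t01.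
have [e [σ hσ]] := perm_exists hc.
exists p, q, r, mm, s, (perm_mx (σ^-1)%g); split.
- exact: perm_unitary.
- exact: hmm.
- exact: hs.
- exact: hdec.
split; first by rewrite -e addnA.
  rewrite tr_perm_mx map_conj_perm invgK -row_permE -col_permE.
  apply/matrixP => i j; rewrite !mxE Xform_cast XB_diag [in RHS]mxE wC_wR hσ.
  by rewrite (inj_eq (@cast_ord_inj _ _ _)) (inj_eq (@perm_inj _ _)).
Qed.

Lemma exist_part (R : realType) (m : nat) (X : 'M[R[i]]_m) :
  (exists Y : 'M[R[i]]_m, (X + Y) \is unitarymx /\ (X - Y) \is unitarymx) ->
  (exists (U V : 'M[R[i]]_m) (p q r : nat) (mm : 'I_r -> nat) (s : 'I_r -> R),
     U \is unitarymx /\ V \is unitarymx /\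
     (forall j, 0 < mm j)%N /\
     (forall j, 0 < s j < 1) /\
     (forall j k : 'I_r, (j < k)%N -> s k < s j) /\
     (p + q + \sum_(j < r) mm j)%N = m /\
     X = U *m Xform m p q mm s *m V).
Proof.
move=> [Y [hA hB]].
have [U0 [P0 [t [hU0 hP0 ht eX]]]] := diag_decomp hA hB.
have [p [q [r [mm [s [Pm [hPm hmm hs hdec [hsum eD]]]]]]]] := sort_diag ht.
exists (U0 *m Pm^t*), (Pm *m P0), p, q, r, mm, s.
split; first by apply: mul_unitarymx; [exact: hU0 | rewrite trmxC_unitary; exact: hPm].
split; first by apply: mul_unitarymx; [exact: hPm | exact: hP0].
do 4 (split; first by []).
by rewrite eX eD !mulmxA.
Qed.

Local Close Scope sesquilinear_scope.

Theorem lemma3p7 (R : realType) (m : nat) (X : 'M[R[i]]_m) :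
  (exists Y : 'M[R[i]]_m, (X + Y) \is unitarymx /\ (X - Y) \is unitarymx) ->
  (exists (U V : 'M[R[i]]_m) (p q r : nat) (mm : 'I_r -> nat) (s : 'I_r -> R),
     U \is unitarymx /\ V \is unitarymx /\
     (forall j, 0 < mm j)%N /\
     (forall j, 0 < s j < 1) /\
     (forall j k : 'I_r, (j < k)%N -> s k < s j) /\
     (p + q + \sum_(j < r) mm j)%N = m /\
     X = U *m Xform m p q mm s *m V)
  /\
  (forall (U V : 'M[R[i]]_m) (p q r : nat) (mm : 'I_r -> nat) (s : 'I_r -> R),
     U \is unitarymx -> V \is unitarymx ->
     (forall j, 0 < mm j)%N ->
     (forall j, 0 < s j < 1) ->
     (forall j k : 'I_r, (j < k)%N -> s k < s j) ->
     (p + q + \sum_(j < r) mm j)%N = m ->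
     X = U *m Xform m p q mm s *m V ->
     forall Y : 'M[R[i]]_m,
       (X + Y) \is unitarymx -> (X - Y) \is unitarymx ->
       exists (W : 'M[R[i]]_q) (H : forall j : 'I_r, 'M[R[i]]_(mm j)),
         [/\ W \is unitarymx,
             (forall j, H j \is hermitianmx (mm j) false Num.conj
                        /\ H j \is unitarymx)
           & Y = U *m Yform m p s W H *m V]).
Proof.
move=> hXY; split; first exact: exist_part.
move=> U V p q r mm s; exact: uniq_main.
Qed.
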